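(* For every class $K$ of algebras of type $\tau$: (1) $H\mathbf Q(K)=\mathbf S\mathbf P\mathbf P_u\mathbf D(K)$; (2) $H\mathbf Q(K)=\mathbf S\mathbf P_u\mathbf P\mathbf D(K)$; (3) $H\mathbf Q(K)=\mathbf S\mathbf P_u\mathbf P_\omega\mathbf D(K)$; (4) $H\mathbf Q(K)=\mathbf S\mathbf L_s\mathbf P\mathbf D(K)=\mathbf L_s\mathbf S\mathbf P\mathbf D(K)=\mathbf L_s\mathbf P_s\mathbf S\mathbf D(K)$.
   Context: A hypersubstitution $\sigma$ of type $\tau$ assigns to each $n$-ary operation symbol an $n$-ary term of type $\tau$, extended to all terms; derived algebras $\mathbf A^\sigma$ replace each fundamental operation $f_\gamma$ by $\sigma(f_\gamma)^{\mathbf A}$, and $\mathbf D(K)$ is the class of derived algebras of members of $K$. A hyper-quasi-identity $\bigwedge_{i<n}(t_i=s_i)\to(t_n=s_n)$ (operation symbols read as hypervariables) is hypersatisfied in $\mathbf A$ if for every hypersubstitution $\sigma$ the quasi-identity $\bigwedge_{i<n}(\sigma(t_i)=\sigma(s_i))\to(\sigma(t_n)=\sigma(s_n))$ holds in $\mathbf A$. $H\mathbf Q(K)$ is the class of all algebras of type $\tau$ that hypersatisfy every hyper-quasi-identity hypersatisfied in all members of $K$. $\mathbf S,\mathbf P,\mathbf P_s,\mathbf P_u,\mathbf P_\omega$ denote closure up to isomorphism under subalgebras, direct products, subdirect products, ultraproducts and finite direct products; $\mathbf L_s$ denotes closure under superdirect limits (direct limits of direct spectra over up-directed posets whose connecting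 homomorphisms are surjective). Convention: the direct product of the empty family is the trivial (one-element) algebra. *)

(* Defs.v *)
From Stdlib Require Import List ClassicalEpsilon.
From mathcomp Require Import all_boot.

Set Implicit Arguments.
Unset Strict Implicit.
Unset Printing Implicit Defensive.

Record signature := Signature { op :> Type; arity : op -> nat }.

Record alg (sg : signature) := Alg {
  car :> Type;
  car_inh : inhabited car;
  ops : forall f : sg, ('I_(arity f) -> car) -> car }.

Arguments ops {sg} a f args.

Section Universal.
Variable sg : signature.

Inductive term (X : Type) : Type :=
  | Var : X -> term X
  | App : forall f : sg, ('I_(arity f) -> term X) -> term X.

Arguments Var {X} x.
Arguments App {X} f ts.

Fixpoint eval (A : alg sg) (X : Type) (v : X -> A) (t : term X) : A :=
  match t with
  | Var x => v x
  | App f ts => ops A f (fun j => eval v (ts j))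
  end.

Fixpoint tsubst (Y X : Type) (t : term Y) (s : Y -> term X) : term X :=
  match t with
  | Var y => s y
  | App f ts => App f (fun j => tsubst (ts j) s)
  end.

(** Hypersubstitutions: each n-ary operation symbol goes to an n-ary term
    (a term in the variables x_0, ..., x_{n-1}). *)
Definition hypersubst := forall f : sg, term 'I_(arity f).

Fixpoint hext (sigma : hypersubst) (X : Type) (t : term X) : term X :=
  match t with
  | Var x => Var x
  | App f ts => tsubst (sigma f) (fun j => hext sigma (ts j))
  end.

Definition derived (A : alg sg) (sigma : hypersubst) : alg sg :=
  @Alg sg (car A) (car_inh A) (fun f args => eval args (sigma f)).

Definition is_hom (A B : alg sg) (h : A -> B) : Prop :=
  forall (f : sg) (args : 'I_(arity f) -> A),
    h (ops A f args) = ops B f (fun j => h (args j)).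

Definition injectiveP (T U : Type) (h : T -> U) := forall x y, h x = h y -> x = y.
Definition surjectiveP (T U : Type) (h : T -> U) := forall y, exists x, h x = y.

Definition is_iso (A B : alg sg) (h : A -> B) : Prop :=
  is_hom h /\ injectiveP h /\ surjectiveP h.

(** Direct product of a family of algebras (the empty product is trivial). *)
Definition prod_alg (I : Type) (B : I -> alg sg) : alg sg :=
  @Alg sg (forall i, B i)
    (inhabits (fun i => epsilon (car_inh (B i)) (fun _ => True)))
    (fun f args i => ops (B i) f (fun j => args j i)).

Definition cls := alg sg -> Prop.
Definition Ceq (C1 C2 : cls) : Prop := forall A, C1 A <-> C2 A.

Definition Dop (K : cls) : cls :=
  fun A => exists B sigma, K B /\ A = derived B sigma.

Definition Sop (K : cls) : cls :=
  fun A => exists B, K B /\ exists h : A -> B, is_hom h /\ injectiveP h.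

Definition Pgen (C : Type -> Prop) (K : cls) : cls :=
  fun A => exists (I : Type) (B : I -> alg sg), C I /\ (forall i, K (B i)) /\
    exists h : A -> prod_alg B, is_iso h.

Definition Pop (K : cls) : cls := Pgen (fun _ => True) K.

Definition finite_type (I : Type) : Prop := exists l : list I, forall i, In i l.
Definition Pwop (K : cls) : cls := Pgen finite_type K.

Definition Psop (K : cls) : cls :=
  fun A => exists (I : Type) (B : I -> alg sg), (forall i, K (B i)) /\
    exists e : A -> prod_alg B, is_hom e /\ injectiveP e /\
      forall i, surjectiveP (fun a => e a i).

Definition ultrafilter (I : Type) (F : (I -> Prop) -> Prop) : Prop :=
  F (fun _ => True) /\ ~ F (fun _ => False) /\
  (forall X Y : I -> Prop, F X -> (forall i, X i -> Y i) -> F Y) /\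
  (forall X Y : I -> Prop, F X -> F Y -> F (fun i => X i /\ Y i)) /\
  (forall X : I -> Prop, F X \/ F (fun i => ~ X i)).

(** P_u: ultraproducts, up to isomorphism: A is (isomorphic to) the quotient
    of prod B by the congruence x ~ y iff {i | x i = y i} is in F, i.e. there
    is a surjective homomorphism from prod B onto A with exactly that kernel. *)
Definition Puop (K : cls) : cls :=
  fun A => exists (I : Type) (B : I -> alg sg) (F : (I -> Prop) -> Prop),
    ultrafilter F /\ (forall i, K (B i)) /\
    exists h : prod_alg B -> A, is_hom h /\ surjectiveP h /\
      forall x y, h x = h y <-> F (fun i => x i = y i).

Definition updirected_poset (I : Type) (le : I -> I -> Prop) : Prop :=
  (forall i, le i i) /\
  (forall i j, le i j -> le j i -> i = j) /\
  (forall i j k, le i j -> le j k -> le i k) /\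
  inhabited I /\
  (forall i j, exists k, le i k /\ le j k).

(** A is (isomorphic to) the
    direct limit iff there are compatible homomorphisms g_i : B_i -> A that are
    jointly surjective and identify exactly the eventually-equal elements. *)
Definition Lsop (K : cls) : cls :=
  fun A => exists (I : Type) (le : I -> I -> Prop) (B : I -> alg sg)
    (h : forall i j, le i j -> B i -> B j),
    updirected_poset le /\ (forall i, K (B i)) /\
    (forall i j (p : le i j), is_hom (h i j p) /\ surjectiveP (h i j p)) /\
    (forall i (p : le i i) x, h i i p x = x) /\
    (forall i j k (p : le i j) (q : le j k) (r : le i k) x,
        h j k q (h i j p x) = h i k r x) /\
    exists g : forall i, B i -> A,
      (forall i, is_hom (g i)) /\
      (forall i j (p : le i j) x, g j (h i j p x) = g i x) /\
      (forall a, exists i x, g i x = a) /\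
      (forall i x y, g i x = g i y <-> exists k (p : le i k), h i k p x = h i k p y).

Record qid := Qid {
  qprem : list (term nat * term nat);
  qconcl : term nat * term nat }.

Definition hypersat (A : alg sg) (q : qid) : Prop :=
  forall (sigma : hypersubst) (v : nat -> A),
    (forall p, In p (qprem q) -> eval v (hext sigma p.1) = eval v (hext sigma p.2)) ->
    eval v (hext sigma (qconcl q).1) = eval v (hext sigma (qconcl q).2).

Definition HQ (K : cls) : cls :=
  fun A => forall q : qid, (forall B, K B -> hypersat B q) -> hypersat A q.

End Universal.

(* Main.v *)
From Stdlib Require Import List ClassicalEpsilon FunctionalExtensionality PropExtensionality ProofIrrelevance Classical.
From mathcomp Require Import all_boot.
From mathcomp Require boolp classical_sets filter.
Require Import Defs.
Set Implicit Arguments.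
Unset Strict Implicit.
Unset Printing Implicit Defensive.

Module UFW.
Local Unset Implicit Arguments.
Module UFM.
Import boolp classical_sets filter.
Lemma uf_exists (J : Type) (le : J -> J -> Prop) :
  inhabited J -> (forall j, le j j) ->
  (forall i j k, le i j -> le j k -> le i k) ->
  (forall i j, exists k, le i k /\ le j k) ->
  exists F : (J -> Prop) -> Prop, ultrafilter F /\ forall j, F (fun k => le j k).
Proof.
move=> [j0] refl trans dir.
pose G : set_system J := fun X => exists j, forall k, le j k -> X k.
have GF : ProperFilter G.
  apply: Build_ProperFilter_ex.
    by move=> P [j Hj]; exists j; apply: Hj; apply: refl.
  split.
  - by exists j0.
  - move=> X Y [j1 H1] [j2 H2]; have [k [k1 k2]] := dir j1 j2.
    by exists k => l kl; split; [apply: H1 | apply: H2]; apply: trans kl.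
  - by move=> P Q PQ [j Hj]; exists j => k /Hj /PQ.
have [U [UU GU]] := ultraFilterLemma GF.
exists U; split; last by move=> j; apply: GU; exists j.
split; first exact: (@filterT _ U _).
split; first exact: (@filter_not_empty _ U _).
split; first by move=> X Y FX XY; apply: (@filterS _ U _ X Y).
split; first by move=> X Y FX FY; apply: (@filterI _ U _ X Y).
by move=> X; apply: (@in_ultra_setVsetC _ U X UU).
Qed.
End UFM.
End UFW.
Import UFW.

Section Basics.
Variable sg : signature.
Implicit Types (A B : alg sg).

Lemma eval_tsubst A (X Y : Type) (t : term sg Y) (s : Y -> term sg X) (v : X -> A) :
  eval v (tsubst t s) = eval (fun y => eval v (s y)) t.
Proof.
elim: t => [y|f ts IH] //=; congr (ops A f); apply: functional_extensionality => j; exact: IH.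
Qed.

Lemma eval_hext A (sigma : hypersubst sg) X (v : X -> A) t :
  eval (A := A) v (hext sigma t) = eval (A := derived A sigma) v t.
Proof.
elim: t => [x|f ts IH] //=; rewrite eval_tsubst /=; congr (eval _ _).
apply: functional_extensionality => j; exact: IH.
Qed.

Definition hcomp (sigma rho : hypersubst sg) : hypersubst sg := fun f => hext sigma (rho f).

Lemma eval_dd A sigma rho X (v : X -> A) t :
  eval (A := derived (derived A sigma) rho) v t = eval (A := derived A (hcomp sigma rho)) v t.
Proof.
elim: t => [x|f ts IH] //=; rewrite /hcomp eval_hext.
by have -> : (fun j => eval (A := derived (derived A sigma) rho) v (ts j)) = (fun j => eval (A:=derived A (hcomp sigma rho)) v (ts j)) by apply: functional_extensionality.
Qed.

Definition hid : hypersubst sg := fun f => @App sg _ f (fun j => Var sg j).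

Lemma eval_hid A X (v : X -> A) t : eval (A := derived A hid) v t = eval (A := A) v t.
Proof.
elim: t => [x|f ts IH] //=; congr (ops A f); apply: functional_extensionality => j; exact: IH.
Qed.

Definition qv A (q : qid sg) : Prop :=
  forall v : nat -> A,
    (forall p, In p (qprem q) -> eval v p.1 = eval v p.2) ->
    eval v (qconcl q).1 = eval v (qconcl q).2.

Definition qmap (sigma : hypersubst sg) (q : qid sg) : qid sg :=
  Qid (List.map (fun p => (hext sigma p.1, hext sigma p.2)) (qprem q))
      (hext sigma (qconcl q).1, hext sigma (qconcl q).2).

Lemma qv_derived A sigma q : qv (derived A sigma) q <-> qv A (qmap sigma q).
Proof.
split=> H v Hp /=.
- rewrite !eval_hext; apply: H => p Hin; rewrite -!eval_hext; apply: (Hp (_, _)).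
  by apply/in_map_iff; exists p.
- rewrite -!eval_hext; apply: H => p /in_map_iff [p' [<- Hin]] /=.
  by rewrite !eval_hext; apply: Hp.
Qed.

Lemma hypersat_qv A q : hypersat A q <-> forall sigma, qv (derived A sigma) q.
Proof.
split=> H sigma v Hp.
- rewrite -!eval_hext; apply: H => p Hin; rewrite !eval_hext; exact: Hp.
- rewrite !eval_hext; apply: H => p Hin; rewrite -!eval_hext; exact: Hp.
Qed.

Lemma qv_dd A sigma rho q : qv (derived (derived A sigma) rho) q <-> qv (derived A (hcomp sigma rho)) q.
Proof.
split=> H v Hp.
- rewrite -!(@eval_dd A sigma rho); apply: H => p Hin; rewrite !(@eval_dd A sigma rho); exact: Hp.
- rewrite !(@eval_dd A sigma rho); apply: H => p Hin; rewrite -!(@eval_dd A sigma rho); exact: Hp.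
Qed.

Lemma qv_hid A q : qv (derived A hid) q <-> qv A q.
Proof.
split=> H v Hp.
- rewrite -!(@eval_hid A); apply: H => p Hin; rewrite !(@eval_hid A); exact: Hp.
- rewrite !(@eval_hid A); apply: H => p Hin; rewrite -!(@eval_hid A); exact: Hp.
Qed.

Variable K : cls sg.
Definition Tq (q : qid sg) := forall B, Dop K B -> qv B q.
Definition Good A := forall q, Tq q -> qv A q.

Lemma Tq_map q sigma : Tq q -> Tq (qmap sigma q).
Proof.
move=> H B [B0 [rho [KB0 ->]]]; apply (proj1 (qv_derived (derived B0 rho) sigma q)); apply (proj2 (qv_dd B0 rho sigma q)).
apply: H; exists B0, (hcomp rho sigma); split=> //.
Qed.

Lemma HQ_Good A : HQ K A <-> Good A.
Proof.
split.
- move=> H q Tqq; apply (proj1 (qv_hid A q)).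
  have HH : forall B, K B -> hypersat B q.
    move=> B KB; apply (proj2 (hypersat_qv B q)) => sigma; apply: Tqq; by exists B, sigma.
  exact (proj1 (hypersat_qv A q) (H q HH) hid).
- move=> H q Hq; apply (proj2 (hypersat_qv A q)) => sigma.
  apply (proj2 (qv_derived A sigma q)); apply: H.
  apply: Tq_map => B [B0 [rho [KB0 ->]]]; exact: (proj1 (hypersat_qv B0 q) (Hq B0 KB0) rho).
Qed.
End Basics.

Lemma mem_In (T : eqType) (x : T) (s : seq T) : x \in s -> In x s.
Proof. elim: s => //= y s IH; rewrite in_cons => /orP [/eqP ->|/IH]; auto. Qed.

Section Sound.
Variable sg : signature.
Implicit Types (A B : alg sg).

Lemma hom_eval A B (h : A -> B) X (v : X -> A) t :
  is_hom h -> h (eval v t) = eval (fun x => h (v x)) t.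
Proof.
move=> hh; elim: t => [x|f ts IH] //=; rewrite hh; congr (ops B f).
apply: functional_extensionality => j; exact: IH.
Qed.

Lemma proj_eval I (B : I -> alg sg) X (v : X -> prod_alg B) t i :
  eval (A := prod_alg B) v t i = eval (fun x => v x i) t.
Proof.
elim: t => [x|f ts IH] //=; congr (ops (B i) f).
apply: functional_extensionality => j; exact: IH.
Qed.

Lemma qv_inj A B (h : A -> B) q : qv B q -> is_hom h -> injectiveP h -> qv A q.
Proof.
move=> HB hh hi v Hp; apply: hi; rewrite !(hom_eval _ _ hh); apply: HB => p Hin.
by rewrite -!(hom_eval _ _ hh) (Hp p Hin).
Qed.

Lemma qv_prod I (B : I -> alg sg) q : (forall i, qv (B i) q) -> qv (prod_alg B) q.
Proof.
move=> HB v Hp; apply: functional_extensionality_dep => i; rewrite !proj_eval.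
apply: HB => p Hin; by rewrite -!proj_eval (Hp p Hin).
Qed.

Lemma qv_Pgen C (X : cls sg) A q : (forall B, X B -> qv B q) -> Pgen C X A -> qv A q.
Proof.
move=> HX [I [B [_ [XB [h [hh [hi _]]]]]]]; apply: (qv_inj (h := h)) => //.
apply: qv_prod => i; exact: HX.
Qed.

Lemma qv_S (X : cls sg) A q : (forall B, X B -> qv B q) -> Sop X A -> qv A q.
Proof. by move=> HX [B [XB [h [hh hi]]]]; apply: (qv_inj (h := h)) => //; apply: HX. Qed.

Lemma qv_Ps (X : cls sg) A q : (forall B, X B -> qv B q) -> Psop X A -> qv A q.
Proof.
move=> HX [I [B [XB [h [hh [hi _]]]]]]; apply: (qv_inj (h := h)) => //.
apply: qv_prod => i; exact: HX.
Qed.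

Lemma F_all I (F : (I -> Prop) -> Prop) T (l : list T) (P : T -> I -> Prop) :
  ultrafilter F -> (forall p, In p l -> F (P p)) -> F (fun i => forall p, In p l -> P p i).
Proof.
move=> [FT [_ [Fm [FI _]]]]; elim: l => [|a l IH] H.
  by apply: (Fm _ _ FT) => i _ p [].
have H1 := IH (fun p Hp => H p (or_intror Hp)).
have H2 := H a (or_introl erefl).
apply: (Fm _ _ (FI _ _ H2 H1)) => i [Ha Hl] p [<-|Hp]; auto.
Qed.

Lemma qv_Pu (X : cls sg) A q : (forall B, X B -> qv B q) -> Puop X A -> qv A q.
Proof.
move=> HX [I [B [F [UF [XB [h [hh [hs hk]]]]]]]] v Hp.
pose v' := fun n => epsilon (car_inh (prod_alg B)) (fun x => h x = v n).
have hv : forall n, h (v' n) = v n.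
  move=> n; rewrite /v'; apply: (epsilon_spec (car_inh (prod_alg B)) (fun x => h x = v n)).
  exact: hs.
have ev : forall t, eval v t = h (eval v' t).
  move=> t; rewrite (hom_eval _ _ hh); congr (eval _ t); apply: functional_extensionality => n.
  by rewrite hv.
rewrite !ev; apply/hk.
have Fp : F (fun i => forall p, In p (qprem q) -> eval v' p.1 i = eval v' p.2 i).
  apply: (F_all (P := fun p i => eval v' p.1 i = eval v' p.2 i)) => // p Hin.
  by apply/hk; rewrite -!ev; apply: Hp.
case: UF => [_ [_ [Fm _]]]; apply: (Fm _ _ Fp) => i Hi.
rewrite !proj_eval; apply: (HX _ (XB i)) => p Hin; rewrite -!proj_eval; exact: Hi.
Qed.

Fixpoint vars X (t : term sg X) : list X :=
  match t with
  | Var x => x :: nil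
  | App f ts => flat_map (fun j => vars (ts j)) (enum 'I_(arity f))
  end.

Lemma eval_vars A X (v v' : X -> A) t :
  (forall x, In x (vars t) -> v x = v' x) -> eval v t = eval v' t.
Proof.
elim: t => [x|f ts IH] /= H; first by apply: H; left.
congr (ops A f); apply: functional_extensionality => j; apply: IH => x Hx.
apply: H; apply/in_flat_map; exists j; split=> //; apply: mem_In; by rewrite mem_enum.
Qed.

End Sound.

Section Lim.
Variable sg : signature.
Implicit Types (A B : alg sg).

Lemma ub_list I (le : I -> I -> Prop) : updirected_poset le ->
  forall l : list I, exists c, forall i, In i l -> le i c.
Proof.
move=> [refl [_ [trans [[i0] dir]]]]; elim=> [|a l [c Hc]]; first by exists i0.
have [d [ad cd]] := dir a c; exists d => i [<-|Hi] //; apply: trans (Hc _ Hi) cd.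
Qed.

Lemma qv_Ls (X : cls sg) A q : (forall B, X B -> qv B q) -> Lsop X A -> qv A q.
Proof.
move=> HX [I [le [B [h [Hpo [XB [hh [hid [hcomp [g [gh [gc [gs gk]]]]]]]]]]]]] v Hp.
have Hpo' := Hpo; case: Hpo' => [refl [_ [trans [[i0] dir]]]].
pose L := flat_map (fun p => vars p.1 ++ vars p.2) (qconcl q :: qprem q).
have inh : inhabited {i : I & B i} by case: (car_inh (B i0)) => b; constructor; exists i0.
pose s n := epsilon inh (fun s => g (projT1 s) (projT2 s) = v n).
have hs : forall n, g _ (projT2 (s n)) = v n.
  move=> n; rewrite /s; apply: (epsilon_spec inh (fun s => g (projT1 s) (projT2 s) = v n)).
  have [i [x Hx]] := gs (v n); by exists (existT _ i x).
have [c Hc] := ub_list Hpo (map (fun n => projT1 (s n)) L).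
have Hc' : forall n, In n L -> le (projT1 (s n)) c.
  by move=> n Hn; apply: Hc; apply/in_map_iff; exists n.
pose v' n := match excluded_middle_informative (In n L) with
             | left H => h _ c (Hc' n H) (projT2 (s n))
             | right _ => epsilon (car_inh (B c)) (fun _ => True) end.
have gv : forall n, In n L -> g c (v' n) = v n.
  by move=> n Hn; rewrite /v'; case: excluded_middle_informative => // H; rewrite gc hs.
have ev : forall t, (forall x, In x (vars t) -> In x L) -> eval v t = g c (eval v' t).
  move=> t Ht; rewrite (hom_eval _ _ (gh c)); apply: eval_vars => x Hx.
  by rewrite gv //; apply: Ht.
have inL : forall p, In p (qconcl q :: qprem q) -> (forall x, In x (vars p.1) -> In x L) /\ (forall x, In x (vars p.2) -> In x L).
  move=> p Hp'; split=> x Hx; apply/in_flat_map; exists p; split=> //; apply/in_app_iff; auto.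
pose E k (pk : le c k) (p : term sg nat * term sg nat) := h c k pk (eval v' p.1) = h c k pk (eval v' p.2).
have Emono : forall k d (pk : le c k) (pd : le c d) p, le k d -> E k pk p -> E d pd p.
  move=> k d pk pd p kd; rewrite /E => H.
  by rewrite -(hcomp _ _ _ pk kd pd) H (hcomp _ _ _ pk kd pd).
have Eall : forall l, (forall p, In p l -> In p (qprem q)) -> exists d (pd : le c d), forall p, In p l -> E d pd p.
  elim=> [|a l IH] Hl; first by exists c, (refl c).
  have [d [pd Hd]] := IH (fun p Hp' => Hl p (or_intror Hp')).
  have Ha : In a (qprem q) by apply: Hl; left.
  have [Ha1 Ha2] := inL a (or_intror Ha).
  have := Hp a Ha; rewrite (ev _ Ha1) (ev _ Ha2) gk => -[k [pk Hk]].
  have [e [ke de]] := dir k d.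
  exists e, (trans _ _ _ pd de) => p [<-|Hp']; first exact: (Emono _ _ pk).
  by apply: (Emono _ _ pd) => //; apply: Hd.
have [d [pd Hd]] := Eall (qprem q) (fun p H => H).
have [Hc1 Hc2] := inL (qconcl q) (or_introl erefl).
rewrite (ev _ Hc1) (ev _ Hc2) -(gc _ _ pd (eval v' _)) -(gc _ _ pd (eval v' (qconcl q).2)).
congr (g d); rewrite !(hom_eval _ _ (proj1 (hh _ _ pd))).
apply: (HX _ (XB d)) => p Hin; rewrite -!(hom_eval _ _ (proj1 (hh _ _ pd))); exact: Hd.
Qed.
End Lim.

Section Quot.
Variable sg : signature.
Variable T : alg sg.
Variable R : T -> T -> Prop.
Hypothesis Rrefl : forall x, R x x.
Hypothesis Rsym : forall x y, R x y -> R y x.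
Hypothesis Rtrans : forall x y z, R x y -> R y z -> R x z.
Hypothesis Rcomp : forall (f : sg) (xs ys : 'I_(arity f) -> T),
  (forall k, R (xs k) (ys k)) -> R (ops T f xs) (ops T f ys).

Definition qcar := {P : T -> Prop | exists x, P = R x}.
Definition qcls (x : T) : qcar := exist _ (R x) (ex_intro _ x erefl).

Lemma cls_eq x y : qcls x = qcls y <-> R x y.
Proof.
split.
- move=> /(f_equal (@proj1_sig _ _)) /= E; have : R y y := Rrefl y.
  by rewrite -E.
- move=> Rxy; apply: eq_sig_hprop => /=; first by move=> ? ? ?; apply: proof_irrelevance.
  apply: functional_extensionality => z; apply: propositional_extensionality.
  split=> H; [apply: Rtrans (Rsym Rxy) H | apply: Rtrans Rxy H].
Qed.

Lemma qcar_inh : inhabited qcar.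
Proof. by case: (car_inh T) => x; constructor; exact: qcls x. Qed.

Definition rep (c : qcar) : T := epsilon (car_inh T) (fun x => qcls x = c).

Lemma clsK c : qcls (rep c) = c.
Proof.
rewrite /rep; apply: (epsilon_spec (car_inh T) (fun x => qcls x = c)).
case: c => P [x Px]; exists x; apply: eq_sig_hprop => /=; last by rewrite Px.
by move=> ? ? ?; apply: proof_irrelevance.
Qed.

Lemma rep_cls x : R (rep (qcls x)) x.
Proof. by apply/cls_eq; rewrite clsK. Qed.

Definition qops (f : sg) (args : 'I_(arity f) -> qcar) : qcar :=
  qcls (ops T f (fun k => rep (args k))).

Definition Qalg : alg sg := @Alg sg qcar qcar_inh qops.

Lemma cls_hom : is_hom (A := T) (B := Qalg) qcls.
Proof.
move=> f args /=; rewrite /qops; apply/cls_eq; apply: Rcomp => k.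
by apply: Rsym; apply: rep_cls.
Qed.

Lemma cls_surj : surjectiveP (qcls : T -> Qalg).
Proof. by move=> c; exists (rep c); apply: clsK. Qed.
End Quot.

Fixpoint idx (X : Type) (x : X) (l : list X) : nat :=
  match l with
  | nil => 0
  | y :: l' => if excluded_middle_informative (x = y) then 0 else S (idx x l')
  end.

Lemma idx_spec X (x : X) l : In x l -> nth_error l (idx x l) = Some x.
Proof.
elim: l => [|y l IH] //= H; case: excluded_middle_informative => [e|ne] /=; first by rewrite e.
by apply: IH; case: H => // E; case: ne.
Qed.

Section HQgen.
Variable sg : signature.
Variable K : cls sg.

Definition sat (B : alg sg) X (w : X -> B) (l : list (term sg X * term sg X)) :=
  forall p, In p l -> eval w p.1 = eval w p.2.

Lemma HQ_gen (A : alg sg) (X : Type) (prem : list (term sg X * term sg X)) (c : term sg X * term sg X) :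
  HQ K A ->
  (forall B, Dop K B -> forall w : X -> B, sat w prem -> eval w c.1 = eval w c.2) ->
  forall w : X -> A, sat w prem -> eval w c.1 = eval w c.2.
Proof.
move=> /HQ_Good HA HK w Hw.
pose L := flat_map (fun p => vars p.1 ++ vars p.2) (c :: prem).
pose rho x := idx x L.
pose tm (t : term sg X) := tsubst t (fun x => Var sg (rho x)).
have etm : forall (B : alg sg) (v : nat -> B) t, eval v (tm t) = eval (fun x => v (rho x)) t.
  by move=> B v t; rewrite /tm eval_tsubst.
pose q := Qid (List.map (fun p => (tm p.1, tm p.2)) prem) (tm c.1, tm c.2).
have Tqq : Tq K q.
  move=> B DB v Hv /=; rewrite !etm; apply: HK => // p Hp.
  have := Hv (tm p.1, tm p.2); rewrite !etm; apply; apply/in_map_iff; by exists p.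
have inL : forall p, In p (c :: prem) -> (forall x, In x (vars p.1) -> In x L) /\ (forall x, In x (vars p.2) -> In x L).
  move=> p Hp'; split=> x Hx; apply/in_flat_map; exists p; split=> //; apply/in_app_iff; auto.
pose a0 := epsilon (car_inh A) (fun _ => True).
pose vw n := match nth_error L n with Some x => w x | None => a0 end.
have ev : forall t, (forall x, In x (vars t) -> In x L) -> eval vw (tm t) = eval w t.
  move=> t Ht; rewrite etm; apply: eval_vars => x Hx; rewrite /vw /rho idx_spec //; exact: Ht.
have [Hc1 Hc2] := inL c (or_introl erefl).
rewrite -(ev _ Hc1) -(ev _ Hc2); apply: (HA q Tqq) => p /in_map_iff [p' [<- Hp']] /=.
have [H1 H2] := inL p' (or_intror Hp').
rewrite (ev _ H1) (ev _ H2); exact: Hw.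
Qed.
End HQgen.

Section UE.
Variable sg : signature.

Lemma ultra_embed (A : alg sg) (J : Type) (le : J -> J -> Prop) (C : J -> alg sg)
  (w : forall j, A -> C j) (X : cls sg) (S : A -> A -> Prop) :
  inhabited J -> (forall j, le j j) -> (forall i j k, le i j -> le j k -> le i k) ->
  (forall i j, exists k, le i k /\ le j k) ->
  (forall j, X (C j)) ->
  (forall (f : sg) args, exists j0, forall k, le j0 k ->
       w k (ops A f args) = ops (C k) f (fun i => w k (args i))) ->
  (forall a b, S a b -> exists j0, forall k, le j0 k -> w k a <> w k b) ->
  exists (U : alg sg) (phi : A -> U), Puop X U /\ is_hom phi /\ (forall a b, S a b -> phi a <> phi b).
Proof.
move=> inhJ refl trans dir XC Hhom Hsep.
have [F [UF cone]] := @UFM.uf_exists J le inhJ refl trans dir.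
have UF' := UF; case: UF' => [FT [Fn [Fm [FI Fc]]]].
pose R (x y : prod_alg C) := F (fun j => x j = y j).
have Rrefl : forall x, R x x by move=> x; apply: (Fm _ _ FT).
have Rsym : forall x y, R x y -> R y x by move=> x y H; apply: (Fm _ _ H).
have Rtrans : forall x y z, R x y -> R y z -> R x z.
  by move=> x y z H1 H2; apply: (Fm _ _ (FI _ _ H1 H2)) => j [-> ->].
have Rcomp : forall (f : sg) (xs ys : 'I_(arity f) -> prod_alg C),
    (forall k, R (xs k) (ys k)) -> R (ops (prod_alg C) f xs) (ops (prod_alg C) f ys).
  move=> f xs ys H.
  have := F_all (l := enum 'I_(arity f)) (P := fun k j => xs k j = ys k j) UF (fun k _ => H k).
  move=> H0; apply: (Fm _ _ H0) => j Hj /=; congr (ops (C j) f); apply: functional_extensionality => k.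
  apply: Hj; apply: mem_In; by rewrite mem_enum.
pose U := Qalg R.
pose phi (a : A) : U := qcls R (fun j => w j a).
exists U, phi; split; last split.
- exists J, C, F; split=> //; split=> //; exists (qcls R); split; first exact: cls_hom.
  split; first exact: cls_surj.
  by move=> x y; apply: cls_eq.
- move=> f args; rewrite /phi.
  have -> : ops U f (fun i => qcls R (fun j => w j (args i))) =
            qcls R (ops (prod_alg C) f (fun i j => w j (args i))).
    by rewrite (cls_hom Rrefl Rsym Rtrans Rcomp).
  apply/cls_eq => //; have [j0 Hj0] := Hhom f args.
  by apply: (Fm _ _ (cone j0)) => k /Hj0 ->.
- move=> a b Sab E; have [j0 Hj0] := Hsep a b Sab.
  have := proj1 (cls_eq Rrefl Rsym Rtrans (fun j => w j a) (fun j => w j b)) E.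
  move=> H; apply: Fn; apply: (Fm _ _ (FI _ _ H (cone j0))) => k [E1 /Hj0]; by [].
Qed.
End UE.

Lemma finite_sig (T : Type) (l : list T) (Q : T -> Prop) : finite_type {x | In x l /\ Q x}.
Proof.
elim: l => [|a l [L HL]].
  by exists nil => -[x [[] _]].
pose lift (y : {x | In x l /\ Q x}) : {x | In x (a :: l) /\ Q x} :=
  exist _ (proj1_sig y) (conj (or_intror (proj1 (proj2_sig y))) (proj2 (proj2_sig y))).
case: (classic (Q a)) => Qa.
- exists (exist _ a (conj (or_introl erefl) Qa) :: List.map lift L) => -[x [[ax|xl] Qx]].
  + left; apply: eq_sig_hprop => //= ? ? ?; apply: proof_irrelevance.
  + right; apply/in_map_iff; exists (exist _ x (conj xl Qx)); split; last exact: HL.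
    apply: eq_sig_hprop => //= ? ? ?; apply: proof_irrelevance.
- exists (List.map lift L) => -[x [[ax|xl] Qx]].
  + by subst x; case: Qa.
  + apply/in_map_iff; exists (exist _ x (conj xl Qx)); split; last exact: HL.
    apply: eq_sig_hprop => //= ? ? ?; apply: proof_irrelevance.
Qed.

Section Compl.
Variable sg : signature.
Variable K : cls sg.
Variable A : alg sg.
Hypothesis HA : HQ K A.

Definition valid (p : term sg A * term sg A) := eval (fun x : A => x) p.1 = eval (fun x : A => x) p.2.
Definition JJ := {l : list (term sg A * term sg A) | forall p, In p l -> valid p}.
Definition leJ (j k : JJ) := forall p, In p (proj1_sig j) -> In p (proj1_sig k).

Definition jnil : JJ := exist (fun l => forall p, In p l -> valid p) nil (fun p (H : In p nil) => False_ind (valid p) H).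
Lemma JJ_inh : inhabited JJ.
Proof. by constructor; exists nil. Qed.
Lemma leJ_refl j : leJ j j. Proof. by []. Qed.
Lemma leJ_trans i j k : leJ i j -> leJ j k -> leJ i k.
Proof. by move=> H1 H2 p /H1 /H2. Qed.
Lemma leJ_dir i j : exists k, leJ i k /\ leJ j k.
Proof.
case: i j => [l1 H1] [l2 H2].
have H : forall p, In p (l1 ++ l2) -> valid p by move=> p /in_app_iff [/H1|/H2].
by exists (exist _ _ H); split=> p Hp /=; apply/in_app_iff; auto.
Qed.

Lemma sep_exists (j : JJ) (a b : A) : a <> b ->
  exists (B : alg sg) (w : A -> B), Dop K B /\ sat w (proj1_sig j) /\ w a <> w b.
Proof.
move=> ne; apply: NNPP => H; apply: ne.
have := @HQ_gen _ K A A (proj1_sig j) (Var sg a, Var sg b) HA.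
move=> /(_ _ (fun x => x)) /=; apply.
- move=> B DB w Hw /=; apply: NNPP => nw; apply: H; by exists B, w.
- by move=> p /(proj2_sig j).
Qed.

Lemma inh_ch : inhabited {B : alg sg & A -> B}.
Proof. by constructor; exists A; exact: (fun x => x). Qed.

Definition ch (j : JJ) (a b : A) : {B : alg sg & A -> B} :=
  epsilon inh_ch (fun s => a <> b -> Dop K (projT1 s) /\ sat (projT2 s) (proj1_sig j) /\ projT2 s a <> projT2 s b).

Lemma ch_spec j a b : a <> b ->
  Dop K (projT1 (ch j a b)) /\ sat (projT2 (ch j a b)) (proj1_sig j) /\ projT2 (ch j a b) a <> projT2 (ch j a b) b.
Proof.
move=> ne; apply: (epsilon_spec inh_ch (fun s => a <> b -> Dop K (projT1 s) /\ sat (projT2 s) (proj1_sig j) /\ projT2 s a <> projT2 s b)) => //.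
have [B [w H]] := sep_exists j ne; by exists (existT _ B w).
Qed.

Lemma hom_cone (f : sg) (args : 'I_(arity f) -> A) :
  exists j0 : JJ, forall (k : JJ) (B : alg sg) (w : A -> B), leJ j0 k -> sat w (proj1_sig k) ->
    w (ops A f args) = ops B f (fun i => w (args i)).
Proof.
pose p := (App (f := f) (fun i => Var sg (args i)), Var sg (ops A f args)).
have Hp : forall p', In p' (p :: nil) -> valid p' by move=> p' [<-|[]].
exists (exist _ _ Hp) => k B w Hk Hw.
have := Hw p (Hk p (or_introl erefl)); by rewrite /p /= => <-.
Qed.

Definition Pairs := {ab : A * A | ab.1 <> ab.2}.

Lemma compl1 : Sop (Pop (Puop (Dop K))) A.
Proof.
have H : forall ab : Pairs, exists (U : alg sg) (phi : A -> U),
    Puop (Dop K) U /\ is_hom phi /\ phi (proj1_sig ab).1 <> phi (proj1_sig ab).2.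
  case=> [[a b] /= ne].
  have XC : forall j, Dop K (projT1 (ch j a b)) by move=> j; case: (ch_spec j ne).
  have Hh : forall (f : sg) args, exists j0, forall k, leJ j0 k ->
      projT2 (ch k a b) (ops A f args) = ops (projT1 (ch k a b)) f (fun i => projT2 (ch k a b) (args i)).
    move=> f args; have [j0 Hj0] := hom_cone args; exists j0 => k Hk.
    case: (ch_spec k ne) => _ [Hs _]; exact: (Hj0 k _ _ Hk Hs).
  have Hs : forall x y, x = a /\ y = b -> exists j0, forall k, leJ j0 k -> projT2 (ch k a b) x <> projT2 (ch k a b) y.
    move=> x y [-> ->]; exists jnil.
    by move=> k _; case: (ch_spec k ne) => _ [].
  have [U [phi [PU [hphi sep]]]] := @ultra_embed sg A JJ leJ (fun j => projT1 (ch j a b)) (fun j => projT2 (ch j a b))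
    (Dop K) (fun x y => x = a /\ y = b) JJ_inh leJ_refl leJ_trans leJ_dir XC Hh Hs.
  exists U, phi; split=> //; split=> //; exact: sep.
pose G1 ab := constructive_indefinite_description _ (H ab).
pose Uf ab := proj1_sig (G1 ab).
have G2 : forall ab, exists phi : A -> Uf ab, Puop (Dop K) (Uf ab) /\ is_hom phi /\ phi (proj1_sig ab).1 <> phi (proj1_sig ab).2.
  by move=> ab; exact: (proj2_sig (G1 ab)).
pose phif ab := proj1_sig (constructive_indefinite_description _ (G2 ab)).
have Hphi : forall ab, Puop (Dop K) (Uf ab) /\ is_hom (phif ab) /\ phif ab (proj1_sig ab).1 <> phif ab (proj1_sig ab).2.
  by move=> ab; exact: (proj2_sig (constructive_indefinite_description _ (G2 ab))).
exists (prod_alg Uf); split.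
- exists Pairs, Uf; split=> //; split; first by move=> ab; case: (Hphi ab).
  exists (fun x => x); split; [by []|split; [by []|by move=> y; exists y]].
- exists (fun a ab => phif ab a); split.
  + move=> f args /=; apply: functional_extensionality_dep => ab.
    by case: (Hphi ab) => _ [-> _].
  + move=> a b E; apply: NNPP => ne.
    have := f_equal (fun x => x (exist _ (a, b) ne : Pairs)) E => /= E'.
    by case: (Hphi (exist _ (a, b) ne)) => _ [_ /=]; apply.
Qed.

Definition J3 := (JJ * list (A * A))%type.
Definition le3 (x y : J3) := leJ x.1 y.1 /\ forall p, In p x.2 -> In p y.2.
Definition Idx (N : list (A * A)) := {ab | In ab N /\ ab.1 <> ab.2}.
Definition C3 (x : J3) := prod_alg (fun n : Idx x.2 => projT1 (ch x.1 (proj1_sig n).1 (proj1_sig n).2)).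
Definition w3 (x : J3) (a : A) : C3 x := fun n => projT2 (ch x.1 (proj1_sig n).1 (proj1_sig n).2) a.

Lemma compl3 : Sop (Puop (Pwop (Dop K))) A.
Proof.
have inh3 : inhabited J3 by case: JJ_inh => j; constructor; exact: (j, nil).
have r3 : forall x, le3 x x by move=> x; split.
have t3 : forall x y z, le3 x y -> le3 y z -> le3 x z.
  by move=> x y z [H1 H2] [H3 H4]; split; [apply: leJ_trans H1 H3|move=> p /H2 /H4].
have d3 : forall x y, exists z, le3 x z /\ le3 y z.
  move=> [j1 N1] [j2 N2]; have [j [H1 H2]] := leJ_dir j1 j2.
  exists (j, N1 ++ N2); split; split=> //= p Hp; apply/in_app_iff; auto.
have XC : forall x, Pwop (Dop K) (C3 x).
  move=> [j N]; exists (Idx N), (fun n : Idx N => projT1 (ch j (proj1_sig n).1 (proj1_sig n).2)).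
  split; first exact: finite_sig.
  split; first by move=> [[a b] [Hin ne]]; case: (ch_spec j ne).
  exists (fun x => x); split; [by []|split; [by []|by move=> y; exists y]].
have Hh : forall (f : sg) (args : 'I_(arity f) -> A), exists j0, forall k, le3 j0 k ->
    @w3 k (ops A f args) = ops (C3 k) f (fun i => @w3 k (args i)).
  move=> f args; have [j0 Hj0] := hom_cone args; exists (j0, nil) => -[k N] [Hk _].
  apply: functional_extensionality_dep => -[[a b] [Hin ne]] /=.
  rewrite /w3 /=; case: (ch_spec k ne) => _ [Hs _]; exact: (Hj0 k _ _ Hk Hs).
have Hs : forall a b, a <> b -> exists j0, forall k, le3 j0 k -> @w3 k a <> @w3 k b.
  move=> a b ne; exists (jnil, (a, b) :: nil).
  move=> [k N] [_ HN] E.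
  have := f_equal (fun x => x (exist _ (a, b) (conj (HN _ (or_introl erefl)) ne) : Idx N)) E.
  by rewrite /w3 /=; case: (ch_spec k ne) => _ [].
have [U [phi [PU [hphi sep]]]] := @ultra_embed sg A J3 le3 C3 (@w3) (Pwop (Dop K)) (fun a b => a <> b) inh3 r3 t3 d3 XC Hh Hs.
exists U; split=> //; exists phi; split=> //.
by move=> a b E; apply: NNPP => ne; exact: sep a b ne E.
Qed.
End Compl.

Section Img.
Variable sg : signature.
Variables (X : Type) (B : alg sg) (w : X -> B).
Hypothesis Xinh : inhabited X.
Definition icar := {b : B | exists t : term sg X, b = eval w t}.
Lemma icar_inh : inhabited icar.
Proof. case: Xinh => x; constructor; exists (w x); by exists (Var sg x). Qed.
Definition iops (f : sg) (args : 'I_(arity f) -> icar) : icar :=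
  exist _ (ops B f (fun k => proj1_sig (args k)))
   (ex_intro _ (App (f := f) (fun k => proj1_sig (constructive_indefinite_description _ (proj2_sig (args k)))))
     (f_equal (ops B f) (functional_extensionality _ _ (fun k =>
        proj2_sig (constructive_indefinite_description _ (proj2_sig (args k))))))).
Definition Img : alg sg := @Alg sg icar icar_inh iops.
Lemma Img_incl : is_hom (A := Img) (B := B) (@proj1_sig _ _) /\ injectiveP (@proj1_sig _ (fun b => exists t : term sg X, b = eval w t)).
Proof.
split=> //; move=> x y E; apply: eq_sig_hprop => // ? ? ?; apply: proof_irrelevance.
Qed.
End Img.

Section Spec.
Variable sg : signature.
Variable K : cls sg.
Variable A : alg sg.
Hypothesis HA : HQ K A.

Definition TA : alg sg :=
  @Alg sg (term sg A) (match car_inh A with inhabits a => inhabits (Var sg a) end)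
    (fun f ts => App (f := f) ts).

Definition I4 := {P : term sg A * term sg A -> Prop |
  (exists l, forall x, P x <-> In x l) /\ forall p, P p -> valid p}.
Definition le4 (P Q : I4) := forall x, proj1_sig P x -> proj1_sig Q x.

Definition theta (P : I4) (s t : TA) := forall B, Dop K B -> forall w : A -> B,
  (forall p, proj1_sig P p -> eval w p.1 = eval w p.2) -> eval w s = eval w t.

Lemma th_refl P x : theta P x x. Proof. by []. Qed.
Lemma th_sym P x y : theta P x y -> theta P y x.
Proof. by move=> H B DB w Hw; rewrite (H B DB w Hw). Qed.
Lemma th_trans P x y z : theta P x y -> theta P y z -> theta P x z.
Proof. by move=> H1 H2 B DB w Hw; rewrite (H1 B DB w Hw) (H2 B DB w Hw). Qed.
Lemma th_comp P (f : sg) (xs ys : 'I_(arity f) -> TA) :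
  (forall k, theta P (xs k) (ys k)) -> theta P (ops TA f xs) (ops TA f ys).
Proof.
move=> H B DB w Hw /=; congr (ops B f); apply: functional_extensionality => k.
exact: H.
Qed.
Lemma th_mono P Q : le4 P Q -> forall s t, theta P s t -> theta Q s t.
Proof. by move=> PQ s t H B DB w Hw; apply: H => // p /PQ /Hw. Qed.

Lemma th_eval P s t : theta P s t -> eval (fun x : A => x) s = eval (fun x : A => x) t.
Proof.
case: P => P [[l Hl] Hv] /= H.
apply: (@HQ_gen _ K A A l (s, t) HA) => /=.
- move=> B DB w Hw; apply: H => // p /Hl; exact: Hw.
- by move=> p /Hl /Hv.
Qed.

Definition BP (P : I4) : alg sg := Qalg (theta P).
Definition clsP (P : I4) (t : TA) : BP P := qcls (theta P) t.
Definition repP (P : I4) (x : BP P) : TA := rep x.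

Lemma repP_cls P t : theta P (repP (clsP P t)) t.
Proof. exact: (rep_cls (@th_refl P) (@th_sym P) (@th_trans P)). Qed.
Lemma clsP_eq P s t : clsP P s = clsP P t <-> theta P s t.
Proof. exact: (cls_eq (@th_refl P) (@th_sym P) (@th_trans P)). Qed.
Lemma clsP_rep P x : clsP P (repP x) = x.
Proof. exact: clsK. Qed.
Lemma clsP_hom P (f : sg) (ts : 'I_(arity f) -> TA) :
  clsP P (App (f := f) ts) = ops (BP P) f (fun k => clsP P (ts k)).
Proof. have H := cls_hom (@th_refl P) (@th_sym P) (@th_trans P) (@th_comp P). exact: (H f ts). Qed.

Definition hP (P Q : I4) (p : le4 P Q) (x : BP P) : BP Q := clsP Q (repP x).
Definition gP (P : I4) (x : BP P) : A := eval (fun x : A => x) (repP x).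

Lemma hP_cls P Q (p : le4 P Q) t : hP p (clsP P t) = clsP Q t.
Proof. by apply/clsP_eq; apply: (th_mono p); apply: repP_cls. Qed.
Lemma gP_cls P t : gP (clsP P t) = eval (fun x : A => x) t.
Proof. by apply: th_eval; apply: repP_cls. Qed.

Lemma I4_poset : updirected_poset le4.
Proof.
split; first by move=> i x.
split.
  move=> [P HP] [Q HQ'] /= H1 H2; apply: eq_sig_hprop => /=.
    by move=> ? ? ?; apply: proof_irrelevance.
  apply: functional_extensionality => x; apply: propositional_extensionality; split; [exact: H1|exact: H2].
split; first by move=> i j k H1 H2 x /H1 /H2.
split.
  constructor; exists (fun _ => False); split; last by [].
  by exists nil.
move=> [P [[l1 H1] V1]] [Q [[l2 H2] V2]].
have HU : (exists l, forall x, (P x \/ Q x) <-> In x l) /\ forall p, (P p \/ Q p) -> valid p.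
  split; last by move=> p [/V1|/V2].
  exists (l1 ++ l2) => x; rewrite in_app_iff -H1 -H2; done.
exists (exist _ (fun x => P x \/ Q x) HU); split=> x /=; auto.
Qed.

Lemma spec_Ls (X : cls sg) : (forall P, X (BP P)) -> Lsop X A.
Proof.
move=> XB; exists I4, le4, BP, hP; split; first exact: I4_poset.
split=> //.
split.
  move=> P Q p; split.
  - move=> f args; pose ts := fun k => repP (args k).
    have E1 : ops (BP P) f args = clsP P (App (f := f) ts).
      rewrite clsP_hom; congr (ops _ f); apply: functional_extensionality => k.
      by rewrite /ts clsP_rep.
    by rewrite E1 hP_cls clsP_hom.
  - move=> y; exists (clsP P (repP y)); by rewrite hP_cls clsP_rep.
split; first by move=> P p x; rewrite /hP clsP_rep.
split; first by move=> P Q R p q r x; rewrite -(clsP_rep x) !hP_cls.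
exists gP; split.
  move=> P f args; rewrite -{1}(_ : (fun k => clsP P (repP (args k))) = args); last first.
    by apply: functional_extensionality => k; rewrite clsP_rep.
  by rewrite -clsP_hom gP_cls.
split; first by move=> P Q p x; rewrite -(clsP_rep x) hP_cls !gP_cls.
split.
  move=> a; have [P _] := I4_poset.
  case: I4_poset => _ [_ [_ [[P0] _]]].
  by exists P0, (clsP P0 (Var sg a)); rewrite gP_cls.
move=> P x y; split.
- rewrite -(clsP_rep x) -(clsP_rep y) !gP_cls => E.
  have [[l Hl] Hv] := proj2_sig P.
  pose Q x' := proj1_sig P x' \/ x' = (repP x, repP y).
  have HQq : (exists l, forall z, Q z <-> In z l) /\ forall p, Q p -> valid p.
    split.
      exists ((repP x, repP y) :: l) => z; rewrite /Q Hl /=; split; case; auto.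
    by move=> p [/Hv|->].
  exists (exist _ Q HQq), (fun z (Hz : proj1_sig P z) => or_introl Hz).
  rewrite !hP_cls; apply/clsP_eq => B DB w Hw; apply: (Hw (repP x, repP y)); by right.
- move=> [Q [p E]]; have := f_equal (@gP Q) E; by rewrite /hP !gP_cls.
Qed.
End Spec.

Section Spec2.
Variable sg : signature.
Variable K : cls sg.
Variable A : alg sg.
Variable P : I4 A.

Definition ch2 (st : TA A * TA A) : {B : alg sg & A -> B} :=
  epsilon (inh_ch A) (fun s => ~ theta K P st.1 st.2 -> Dop K (projT1 s) /\
     (forall p, proj1_sig P p -> eval (projT2 s) p.1 = eval (projT2 s) p.2) /\
     eval (projT2 s) st.1 <> eval (projT2 s) st.2).

Lemma ch2_spec st : ~ theta K P st.1 st.2 ->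
  Dop K (projT1 (ch2 st)) /\
     (forall p, proj1_sig P p -> eval (projT2 (ch2 st)) p.1 = eval (projT2 (ch2 st)) p.2) /\
     eval (projT2 (ch2 st)) st.1 <> eval (projT2 (ch2 st)) st.2.
Proof.
move=> nt; apply: (epsilon_spec (inh_ch A) (fun s => ~ theta K P st.1 st.2 -> Dop K (projT1 s) /\
     (forall p, proj1_sig P p -> eval (projT2 s) p.1 = eval (projT2 s) p.2) /\
     eval (projT2 s) st.1 <> eval (projT2 s) st.2)) => //.
apply: NNPP => H; apply: nt => B DB w Hw; apply: NNPP => ne; apply: H.
by exists (existT _ B w).
Qed.

Definition Jn := {st : TA A * TA A | ~ theta K P st.1 st.2}.
Definition Fam (n : Jn) := projT1 (ch2 (proj1_sig n)).
Definition W (n : Jn) : A -> Fam n := projT2 (ch2 (proj1_sig n)).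

Lemma W_rep n t : eval (W n) (repP (clsP K P t)) = eval (W n) t.
Proof.
have [DB [Hs _]] := ch2_spec (proj2_sig n).
exact (@repP_cls sg K A P t _ DB (W n) Hs).
Qed.

Lemma ops_rep (f : sg) (args : 'I_(arity f) -> BP K P) :
  ops (BP K P) f args = clsP K P (App (f := f) (fun k => repP (args k))).
Proof.
rewrite clsP_hom; congr (ops _ f); apply: functional_extensionality => k.
by rewrite clsP_rep.
Qed.

Definition eP (x : BP K P) : prod_alg Fam := fun n => eval (W n) (repP x).

Lemma eP_hom : is_hom eP.
Proof.
move=> f args; apply: functional_extensionality_dep => n.
by rewrite /eP ops_rep W_rep.
Qed.

Lemma eP_inj : injectiveP eP.
Proof.
move=> x y E.
have Th : theta K P (repP x) (repP y).
  apply: NNPP => nt.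
  have := f_equal (fun z => z (exist (fun st : TA A * TA A => ~ theta K P st.1 st.2) (repP x, repP y) nt : Jn)) E.
  rewrite /eP /=; by case: (@ch2_spec (repP x, repP y) nt) => _ [_ ].
by rewrite -(clsP_rep x) -(clsP_rep y); apply/clsP_eq.
Qed.

Lemma BP_SP : Sop (Pop (Dop K)) (BP K P).
Proof.
exists (prod_alg Fam); split; last by exists eP; split; [exact: eP_hom|exact: eP_inj].
exists Jn, Fam; split=> //; split; first by move=> n; case: (ch2_spec (proj2_sig n)).
exists (fun x => x); split; [by []|split; [by []|by move=> y; exists y]].
Qed.

Definition Sfam (n : Jn) : alg sg := Img (W n) (car_inh A).

Definition eP' (x : BP K P) : prod_alg Sfam :=
  fun n => exist _ (eval (W n) (repP x)) (ex_intro _ (repP x) erefl).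

Lemma BP_PsS : Psop (Sop (Dop K)) (BP K P).
Proof.
exists Jn, Sfam; split.
  move=> n; exists (Fam n); split; first by case: (ch2_spec (proj2_sig n)).
  exists (@proj1_sig _ _); exact: (Img_incl (W n) (car_inh A)).
exists eP'; split.
  move=> f args; apply: functional_extensionality_dep => n.
  apply: eq_sig_hprop; first by move=> ? ? ?; apply: proof_irrelevance.
  exact (f_equal (fun z => z n) (eP_hom args)).
split.
  move=> x y E; apply: eP_inj; apply: functional_extensionality_dep => n.
  exact: (f_equal (@proj1_sig _ _) (f_equal (fun z => z n) E)).
move=> n [b [t Hb]]; exists (clsP K P t); apply: eq_sig_hprop => /=.
  by move=> ? ? ?; apply: proof_irrelevance.
by rewrite W_rep Hb.
Qed.
End Spec2.

Lemma app_pi (T : Type) (P : T -> Prop) (G : T -> Type) (x : forall t : {s | P s}, G (proj1_sig t))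
  s (H1 H2 : P s) : x (exist _ s H1) = x (exist _ s H2).
Proof. by rewrite (proof_irrelevance _ H1 H2). Qed.

Ltac pi_tac := solve [ reflexivity | match goal with |- ?x (exist _ ?s ?H1) = ?x (exist _ ?s ?H2) => rewrite (proof_irrelevance _ H1 H2); reflexivity end].

Section PuLs.
Local Unset Implicit Arguments.
Variable sg : signature.

Variable X : cls sg.
Variable U : alg sg.
Variable I : Type.
Variable Cf : I -> alg sg.
Variable F : (I -> Prop) -> Prop.
Hypothesis UF : ultrafilter F.
Variable Ii : I -> Type.
Variable Bi : forall i, Ii i -> alg sg.
Hypothesis XB : forall i (k : Ii i), X (Bi i k).
Variable hi : forall i, Cf i -> prod_alg (Bi i).
Hypothesis hiso : forall i, is_iso (hi i).
Variable hU : prod_alg Cf -> U.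
Hypothesis hUh : is_hom hU.
Hypothesis hUs : surjectiveP hU.
Hypothesis hUk : forall x y, hU x = hU y <-> F (fun i => x i = y i).

Definition hinv i (y : prod_alg (Bi i)) : Cf i := epsilon (car_inh (Cf i)) (fun c => hi i c = y).
Lemma hinvK i y : hi i (hinv i y) = y.
Proof.
rewrite /hinv; apply: (epsilon_spec (car_inh (Cf i)) (fun c => hi i c = y)).
by case: (hiso i) => _ [_ ]; apply.
Qed.
Lemma hiK i c : hinv i (hi i c) = c.
Proof. by case: (hiso i) => _ [Hi _]; apply: Hi; rewrite hinvK. Qed.
Lemma hinv_hom i : is_hom (hinv i).
Proof.
move=> f ys; case: (hiso i) => Hh [Hi _]; apply: Hi; rewrite hinvK Hh.
congr (ops _ f); apply: functional_extensionality => j; by rewrite hinvK.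
Qed.

Definition Lam := {Z : I -> Prop | F Z}.
Definition leL (Z Y : Lam) := forall i, proj1_sig Y i -> proj1_sig Z i.
Definition SS := {i : I & Ii i}.
Definition BB (s : SS) := Bi (projT1 s) (projT2 s).
Definition Sub (Z : Lam) := {s : SS | proj1_sig Z (projT1 s)}.
Definition D (Z : Lam) : alg sg := prod_alg (fun t : Sub Z => BB (proj1_sig t)).
Definition hL (Z Y : Lam) (p : leL Z Y) (x : D Z) : D Y :=
  fun t => x (exist _ (proj1_sig t) (p _ (proj2_sig t))).
Definition dflt (s : SS) : BB s := epsilon (car_inh (BB s)) (fun _ => True).
Definition ext (Z : Lam) (x : D Z) (i : I) : prod_alg (Bi i) :=
  fun k => match excluded_middle_informative (proj1_sig Z i) with
           | left H => x (exist _ (existT _ i k) H)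
           | right _ => dflt (existT _ i k) end.
Definition tup Z (x : D Z) : prod_alg Cf := fun i => hinv i (ext Z x i).
Definition gL Z (x : D Z) : U := hU (tup Z x).

Lemma ext_in Z (x : D Z) i (H : proj1_sig Z i) k : ext Z x i k = x (exist _ (existT _ i k) H).
Proof.
rewrite /ext; case: excluded_middle_informative => [H'|n]; last by case: n.
by rewrite (proof_irrelevance _ H' H).
Qed.

Lemma Lam_poset : updirected_poset leL.
Proof.
case: UF => [FT [Fn [Fm [FI _]]]].
split; first by move=> Z i.
split.
  move=> [Z HZ] [Y HY] /= H1 H2; apply: eq_sig_hprop => /=; first by move=> ? ? ?; apply: proof_irrelevance.
  apply: functional_extensionality => i; apply: propositional_extensionality; split; [exact: H2|exact: H1].
split; first by move=> a b c H1 H2 i /H2 /H1.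
split; first by constructor; exists (fun _ => True).
move=> [Z HZ] [Y HY]; exists (exist _ (fun i => Z i /\ Y i) (FI _ _ HZ HY)).
by split=> i /= [].
Qed.

Lemma PuLs : Lsop (Pop X) U.
Proof.
have UF' := UF; case: UF' => [FT [Fn [Fm [FI _]]]].
exists Lam, leL, D, hL; split; first exact: Lam_poset.
split.
  move=> Z; exists (Sub Z), (fun t : Sub Z => BB (proj1_sig t)); split=> //; split.
    by move=> t; apply: XB.
  exists (fun x => x); split; [by []|split; [by []|by move=> y; exists y]].
split.
  move=> Z Y p; split; first by [].
  move=> y; exists (fun t : Sub Z => match excluded_middle_informative (proj1_sig Y (projT1 (proj1_sig t))) with
            | left H => y (exist _ (proj1_sig t) H) | right _ => dflt (proj1_sig t) end).
  apply: functional_extensionality_dep => -[s Hs]; rewrite /hL /=.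
  case: excluded_middle_informative => [H|n]; last by case: n.
  pi_tac.
split.
  move=> Z p x; apply: functional_extensionality_dep => -[s Hs]; rewrite /hL /=; pi_tac.
split.
  move=> Z Y W p q r x; apply: functional_extensionality_dep => -[s Hs]; rewrite /hL /=; pi_tac.
exists gL; split.
  move=> Z f xs; rewrite /gL -hUh; apply/hUk; apply: (Fm _ _ (proj2_sig Z)) => i Hi /=.
  rewrite /tup -hinv_hom; congr (hinv i _); apply: functional_extensionality_dep => k.
  rewrite (ext_in _ _ _ Hi) /=; congr (ops _ f); apply: functional_extensionality => j; by rewrite (ext_in _ _ _ Hi).
split.
  move=> Z Y p x; rewrite /gL; apply/hUk; apply: (Fm _ _ (proj2_sig Y)) => i Hi.
  rewrite /tup; congr (hinv i _); apply: functional_extensionality_dep => k.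
  by rewrite (ext_in _ _ _ Hi) (ext_in _ _ _ (p _ Hi)) /hL /=; pi_tac.
split.
  move=> u; have [c <-] := hUs u.
  pose Z0 : Lam := exist _ (fun _ => True) FT.
  exists Z0, (fun t : Sub Z0 => hi _ (c (projT1 (proj1_sig t))) (projT2 (proj1_sig t))).
  rewrite /gL; congr (hU _); apply: functional_extensionality_dep => i.
  rewrite /tup; have -> : ext Z0 (fun t : Sub Z0 => hi _ (c (projT1 (proj1_sig t))) (projT2 (proj1_sig t))) i = hi i (c i).
    by apply: functional_extensionality_dep => k; rewrite (ext_in _ _ _ (Logic.I : proj1_sig Z0 i)).
  exact: hiK.
move=> Z x y; split.
- move=> /hUk E.
  exists (exist _ (fun i => proj1_sig Z i /\ tup Z x i = tup Z y i) (FI _ _ (proj2_sig Z) E)).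
  exists (fun i (H : proj1_sig Z i /\ tup Z x i = tup Z y i) => match H with conj a _ => a end).
  apply: functional_extensionality_dep => -[[i k] [HZ Ht]]; rewrite /hL /=.
  have := f_equal (hi i) Ht; rewrite /tup !hinvK => /(f_equal (fun z => z k)).
  rewrite /= (ext_in Z x i HZ) (ext_in Z y i HZ) => E1; exact E1.
- move=> [Y [p E]].
  have C : forall z : D Z, gL Y (hL Z Y p z) = gL Z z.
    move=> z; rewrite /gL; apply/hUk; apply: (Fm _ _ (proj2_sig Y)) => i Hi.
    rewrite /tup; congr (hinv i _); apply: functional_extensionality_dep => k.
    by rewrite (ext_in _ _ _ Hi) (ext_in _ _ _ (p _ Hi)) /hL /=; pi_tac.
  by rewrite -C E C.
Qed.
End PuLs.

Lemma Pu_Ls sg (C : Type -> Prop) (X : cls sg) U : Puop (Pgen C X) U -> Lsop (Pop X) U.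
Proof.
move=> [I [Cf [F [UF [PC [hU [hUh [hUs hUk]]]]]]]].
pose d1 i := constructive_indefinite_description _ (PC i).
pose Ii i := proj1_sig (d1 i).
pose d2 i := constructive_indefinite_description _ (proj2_sig (d1 i)).
pose Bi i : Ii i -> alg sg := proj1_sig (d2 i).
have XB : forall i k, X (Bi i k) by move=> i; case: (proj2_sig (d2 i)) => _ [].
pose d3 i := constructive_indefinite_description _ (proj2 (proj2 (proj2_sig (d2 i)))).
exact: (@PuLs sg X U I Cf F UF Ii Bi XB (fun i => proj1_sig (d3 i)) (fun i => proj2_sig (d3 i)) hU hUh hUs hUk).
Qed.

Lemma Sop_mono sg (X Y : cls sg) A : (forall B, X B -> Y B) -> Sop X A -> Sop Y A.
Proof. by move=> H [B [XB R]]; exists B; split; auto. Qed.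
Lemma Puop_mono sg (X Y : cls sg) A : (forall B, X B -> Y B) -> Puop X A -> Puop Y A.
Proof. by move=> H [I [B [F [UF [XB R]]]]]; exists I, B, F; split=> //; split=> // i; auto. Qed.
Lemma Pgen_mono sg C C' (X Y : cls sg) A : (forall I, C I -> C' I) -> (forall B, X B -> Y B) -> Pgen C X A -> Pgen C' Y A.
Proof. by move=> HC H [I [B [CI [XB R]]]]; exists I, B; split; auto. Qed.

Theorem proposition5p4 (sg : signature) (K : cls sg) :
  Ceq (HQ K) (Sop (Pop (Puop (Dop K)))) /\
  Ceq (HQ K) (Sop (Puop (Pop (Dop K)))) /\
  Ceq (HQ K) (Sop (Puop (Pwop (Dop K)))) /\
  Ceq (HQ K) (Sop (Lsop (Pop (Dop K)))) /\
  Ceq (HQ K) (Lsop (Sop (Pop (Dop K)))) /\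
  Ceq (HQ K) (Lsop (Psop (Sop (Dop K)))).
Proof.
have base : forall q, Tq K q -> forall B, Dop K B -> qv B q by move=> q Tqq B DB; exact: Tqq.
split; last split; last split; last split; last split.
- move=> A; split; first exact: compl1.
  move=> H; apply/HQ_Good => q Tqq; apply: qv_S H => B; apply: qv_Pgen => C; apply: qv_Pu; exact: base.
- move=> A; split.
    move=> HA; apply: Sop_mono (compl3 HA) => B; apply: Puop_mono => C; exact: Pgen_mono.
  move=> H; apply/HQ_Good => q Tqq; apply: qv_S H => B; apply: qv_Pu => C; apply: qv_Pgen; exact: base.
- move=> A; split; first exact: compl3.
  move=> H; apply/HQ_Good => q Tqq; apply: qv_S H => B; apply: qv_Pu => C; apply: qv_Pgen; exact: base.
- move=> A; split.
    move=> HA; apply: Sop_mono (compl3 HA) => B; exact: Pu_Ls.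
  move=> H; apply/HQ_Good => q Tqq; apply: qv_S H => B; apply: qv_Ls => C; apply: qv_Pgen; exact: base.
- move=> A; split.
    move=> HA; apply: (spec_Ls HA) => P; exact: BP_SP.
  move=> H; apply/HQ_Good => q Tqq; apply: qv_Ls H => B; apply: qv_S => C; apply: qv_Pgen; exact: base.
- move=> A; split.
    move=> HA; apply: (spec_Ls HA) => P; exact: BP_PsS.
  move=> H; apply/HQ_Good => q Tqq; apply: qv_Ls H => B; apply: qv_Ps => C; apply: qv_S; exact: base.
Qed.
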